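(* A multi-head HyTN $\mathcal{H}$ is consistent if and only if it is conservative, i.e. contains no negative cycle. Moreover, if all weights of $\mathcal{H}$ are integers, then $\mathcal{H}$ admits an integral feasible scheduling $s:V\to\mathbb{Z}$ if and only if it is conservative.
   Context: A multi-head HyTN is a pair $\mathcal{H}=(V,\mathcal{A})$, $V$ a finite node set, $\mathcal{A}$ a finite set of hyperarcs $A=(t_A,H_A,w_A)$ with tail $t_A\in V$, nonempty head set $H_A\subseteq V\setminus\{t_A\}$ and weights $w_A(v)\in\mathbb{R}$ for $v\in H_A$. A scheduling $s:V\to\mathbb{R}$ is feasible if $s(t_A)\ge\min_{v\in H_A}\{s(v)-w_A(v)\}$ for all $A\in\mathcal{A}$; $\mathcal{H}$ is consistent if a feasible scheduling exists. A cycle is a pair $(S,\mathcal{C})$ with $S\subseteq V$, $\mathcal{C}\subseteq\mathcal{A}$, such that $S=\bigcup_{A\in\mathcal{C}}(H_A\cup\{t_A\})\neq\emptyset$ and for every $v\in S$ there is a unique $A\in\mathcal{C}$ with $t_A=v$, denoted $a(v)$. A finite cyclic sequence is a sequence $v_1,\ldots,v_p$ of nodes of $S$ with $v_{t+1}\in H_{a(v_t)}$ for $1\le t<p$, $v_p=v_1$, and no other repeated node. The cycle is negative if every finite cyclic sequence satisfies $\sum_{t=1}^{p-1}w_{a(v_t)}(v_{t+1})<0$. $\mathcal{H}$ is conservative if it has no negative cycle. *)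

(* Defs.v *)
From HB Require Import structures.
From mathcomp Require Import all_boot all_order all_algebra.
Set Implicit Arguments. Unset Strict Implicit. Unset Printing Implicit Defensive.
Import Order.TTheory GRing.Theory Num.Theory.
Local Open Scope ring_scope.

(* A multi-head HyTN over node set V (finType) with hyperarcs indexed by a
   finType I: hyperarc A has tail t A, head set H A and weights w A v. *)
Definition wf_HyTN (V I : finType) (t : I -> V) (H : I -> {set V}) : Prop :=
  forall A : I, H A != set0 /\ t A \notin H A.

(* s(t_A) >= min_{v in H_A} (s v - w_A v), written as: some head attains it. *)
Definition feasible (R : numDomainType) (V I : finType) (t : I -> V)
  (H : I -> {set V}) (w : I -> V -> R) (s : V -> R) : Prop :=
  forall A : I, exists2 v, v \in H A & s v - w A v <= s (t A).

Definition consistent (R : numDomainType) (V I : finType) (t : I -> V)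
  (H : I -> {set V}) (w : I -> V -> R) : Prop :=
  exists s : V -> R, feasible t H w s.

Definition is_cycle (V I : finType) (t : I -> V) (H : I -> {set V})
  (S : {set V}) (C : {set I}) : Prop :=
  [/\ S = \bigcup_(A in C) (t A |: H A), S != set0 &
      forall v, v \in S -> #|[set A in C | t A == v]| = 1].

(* A finite cyclic sequence v_1,...,v_{k+1},v_1 (the k+1 distinct nodes are
   c 0, ..., c k, successor taken cyclically); a i is the arc a(c i) of C with
   tail c i (unique since (S,C) is a cycle). *)
Definition cyclic_seq (V I : finType) (t : I -> V) (H : I -> {set V})
  (S : {set V}) (C : {set I}) (k : nat) (c : 'I_k.+1 -> V)
  (a : 'I_k.+1 -> I) : Prop :=
  [/\ injective c,
      forall i, c i \in S,
      forall i, a i \in C /\ t (a i) = c i &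
      forall i, c (ordS i) \in H (a i)].

Definition negative_cycle (R : numDomainType) (V I : finType) (t : I -> V)
  (H : I -> {set V}) (w : I -> V -> R) (S : {set V}) (C : {set I}) : Prop :=
  is_cycle t H S C /\
  forall (k : nat) (c : 'I_k.+1 -> V) (a : 'I_k.+1 -> I),
    cyclic_seq t H S C c a -> \sum_(i < k.+1) w (a i) (c (ordS i)) < 0.

Definition conservative (R : numDomainType) (V I : finType) (t : I -> V)
  (H : I -> {set V}) (w : I -> V -> R) : Prop :=
  forall S C, ~ negative_cycle t H w S C.

(* Main.v *)
Require Import Defs.
From HB Require Import structures.
From mathcomp Require Import all_boot all_order all_algebra.
From mathcomp Require Import lra zify.
From Stdlib Require Import Classical.
Set Implicit Arguments. Unset Strict Implicit. Unset Printing Implicit Defensive.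
Import Order.TTheory GRing.Theory Num.Theory.
Lemma iter_period (V : Type) (f : V -> V) (x : V) m n :
  iter m f x = x -> iter (m * n) f x = x.
Proof.
move=> Hm; elim: n => [|n IH]; first by rewrite muln0.
by rewrite mulnS iterD IH Hm.
Qed.

Lemma cycle_exists (V : finType) (f : V -> V) (v0 : V) :
  exists k (c : 'I_k.+1 -> V), [/\ injective c, (forall i, c (ordS i) = f (c i)) &
    (forall i, exists n, c i = iter n f v0)].
Proof.
pose g (i : 'I_(#|V|.+1)) := iter i f v0.
have : ~~ injectiveb g.
  apply/negP => /injectiveP inj; have := leq_card g inj.
  by rewrite card_ord ltnn.
case/injectivePn => i [j nij eqij].
wlog lij : i j nij eqij / i < j.
  move=> Hw; case: (ltngtP i j) => [h|h|h]; first exact: (Hw i j).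
  - by apply: (Hw j i) => //; rewrite eq_sym.
  - by move: nij; rewrite (val_inj h) eqxx.
set p := j - i.
have pP : 0 < p by rewrite /p subn_gt0.
have per : forall n, i <= n -> iter (p + n) f v0 = iter n f v0.
  move=> n hn; have e : p + n = (n - i) + j by rewrite /p; lia.
  by rewrite e iterD -[iter j f v0]/(g j) -eqij /g -iterD subnK.
set x := iter #|V| f v0.
have xP : iter p f x = x.
  by rewrite /x -iterD per // -ltnS; exact: ltn_ord.
have exm : exists m, (0 < m) && (iter m f x == x) by exists p; rewrite pP xP eqxx.
case: (ex_minnP exm) => m /andP[m0 /eqP hm] mmin.
exists m.-1; exists (fun i : 'I_m.-1.+1 => iter i f x); split; last by move=> q; exists (q + #|V|); rewrite iterD.
  move=> a b hab; apply/val_inj => /=.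
  wlog lab : a b hab / a <= b.
    move=> Hw; case: (leqP a b) => h; first exact: Hw.
    by apply/esym/Hw => //; apply: ltnW.
  apply/eqP; rewrite eqn_leq lab /=; apply/negP => hba.
  have bm : (b : nat) < m by have := ltn_ord b; lia.
  have h1 : iter (m - b + a) f x = x.
    by rewrite iterD hab -iterD subnK // ltnW.
  have := mmin (m - b + a); rewrite h1 eqxx andbT.
  have -> : 0 < m - b + a by rewrite addn_gt0 subn_gt0 bm.
  by move=> /(_ isT); lia.
move=> k /=; move: (k : nat) (ltn_ord k) => {}k hk; rewrite prednK // in hk *.
have im : k < m by lia.
case: (ltngtP k.+1 m) => h.
- by rewrite modn_small.
- lia.
- by rewrite h modnn -iterS h hm.
Qed.

Local Open Scope ring_scope.


Lemma feas_cons (R : archiRealFieldType) (V I : finType) (t : I -> V)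
  (H : I -> {set V}) (w : I -> V -> R) (s : V -> R) :
  feasible t H w s -> conservative t H w.
Proof.
move=> fs S C [[HS Sne Huniq] Hneg].
case: (set_0Vmem S) => [S0|[v0 v0S]]; first by rewrite S0 eqxx in Sne.
have arcP : forall v, v \in S -> exists A, (A \in C) && (t A == v).
  move=> v vS; have := Huniq v vS; move/eqP/cards1P => [A hA].
  exists A; have : A \in [set A in C | t A == v] by rewrite hA set11.
  by rewrite inE.
have [A0 _] := arcP v0 v0S.
pose arc v := odflt A0 [pick A | (A \in C) && (t A == v)].
have arcE : forall v, v \in S -> (arc v \in C) /\ t (arc v) = v.
  move=> v vS; rewrite /arc; case: pickP => [A /andP[AC /eqP tA] | none] //=.
  by case: (arcP v vS) => A hA; rewrite none in hA.
pose head A := odflt (t A) [pick v | (v \in H A) && (s v - w A v <= s (t A))].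
have headE : forall A, (head A \in H A) /\ s (head A) - w A (head A) <= s (t A).
  move=> A; rewrite /head; case: pickP => [v /andP[vH le] | none] //=.
  by case: (fs A) => v vH le; have := none v; rewrite vH le.
pose f v := if v \in S then head (arc v) else v.
have fS : forall v, v \in S -> f v \in S.
  move=> v vS; rewrite /f vS HS; apply/bigcupP; exists (arc v); first by case: (arcE v vS).
  by rewrite in_setU1 (proj1 (headE _)) orbT.
have iterS : forall n, iter n f v0 \in S.
  by elim => [|n IH] //=; apply: fS.
case: (cycle_exists f v0) => k [c [cinj cS citer]].
have cinS : forall i, c i \in S by move=> i; case: (citer i) => n ->.
have cyc : cyclic_seq t H S C c (fun i => arc (c i)).
  split => // i; first by case: (arcE _ (cinS i)).
  by rewrite cS /f cinS; case: (headE (arc (c i))).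
have := Hneg k c (fun i => arc (c i)) cyc.
apply/negP; rewrite -leNgt.
have e : \sum_(i < k.+1) (s (c (ordS i)) - s (c i)) = 0.
  by rewrite sumrB [X in _ - X](reindex_inj (@ordS_inj _)) subrr.
rewrite -[X in X <= _]e.
apply: ler_sum => i _ /=.
have [_ tA] := arcE _ (cinS i); rewrite cS /f cinS.
case: (headE (arc (c i))) => _; rewrite tA => le; lra.
Qed.

Definition featJ (R : numDomainType) (V I : finType) (t : I -> V)
  (H : I -> {set V}) (w : I -> V -> R) (J : {set I}) (s : V -> R) : Prop :=
  forall A, A \in J -> exists2 v, v \in H A & s v - w A v <= s (t A).

Lemma int_norm (R : archiRealFieldType) (x : R) : x \is a Num.int -> `|x| \is a Num.int.
Proof. by move=> h; rewrite intrE natr_norm_int. Qed.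

Lemma term_le_sum (R : realDomainType) (T : finType) (P : pred T) (F : T -> R) i :
  P i -> (forall j, 0 <= F j) -> F i <= \sum_(j | P j) F j.
Proof.
move=> Pi F0; rewrite (bigD1 i) //= lerDl; exact: sumr_ge0.
Qed.

Lemma lowering (R : archiRealFieldType) (V I : finType) (t : I -> V)
  (H : I -> {set V}) (w : I -> V -> R) (intw : Prop)
  (Hint : intw -> forall A v, v \in H A -> w A v \is a Num.int)
  (J : {set I}) (K : {set V}) (sK : V -> R) :
  (forall A, A \in J -> t A \in K ->
     exists2 v, (v \in H A) && (v \in K) & sK v - w A v <= sK (t A)) ->
  (intw -> forall v, v \in K -> sK v \is a Num.int) ->
  forall s', featJ t H w [set A in J | (t A \notin K) && [disjoint H A & K]] s' ->
  (intw -> forall v, s' v \is a Num.int) ->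
  exists s, featJ t H w J s /\ (intw -> forall v, s v \is a Num.int).
Proof.
move=> hK iK s' hs' is'.
pose M := \sum_(B : I) \sum_(v in H B :&: K) `|sK v - w B v - s' (t B)|.
exists (fun v => if v \in K then sK v - M else s' v); split.
  move=> A AJ; case: ifP => tAK.
    case: (hK A AJ tAK) => v /andP[vH vK] le; exists v => //.
    by rewrite vK; lra.
  case: (pickP (fun v => (v \in H A) && (v \in K))) => [v /andP[vH vK] | none].
    exists v => //; rewrite vK.
    have : sK v - w A v - s' (t A) <= M.
      apply: le_trans (ler_norm _) _.
      apply: le_trans (_ : \sum_(v0 in H A :&: K) `|sK v0 - w A v0 - s' (t A)| <= M).
        apply: (@term_le_sum _ _ (mem (H A :&: K))) => [|j //].
        by rewrite /= inE vH vK.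
      by apply: (@term_le_sum _ _ predT) => // j; apply: sumr_ge0.
    lra.
  have AJ' : A \in [set A in J | (t A \notin K) && [disjoint H A & K]].
    rewrite inE AJ tAK /= disjoint_subset; apply/subsetP => v vH.
    by rewrite inE; apply/negP => vK; have := none v; rewrite vH vK.
  case: (hs' A AJ') => v vH le; exists v => //.
  have -> : (v \in K) = false.
    by apply/negP => vK; have := none v; rewrite vH vK.
  done.
move=> iw v; case: ifP => vK; last exact: is'.
apply: rpredB; first exact: iK.
apply: rpred_sum => B _; apply: rpred_sum => u; rewrite inE => /andP[uH uK].
apply: int_norm; apply: rpredB; [apply: rpredB|]; first exact: iK.
  exact: (Hint iw).
exact: is'.
Qed.

Lemma cons_feas (R : archiRealFieldType) (V I : finType) (t : I -> V)
  (H : I -> {set V}) (w : I -> V -> R) (intw : Prop)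
  (Hint : intw -> forall A v, v \in H A -> w A v \is a Num.int) :
  conservative t H w -> forall J : {set I},
  exists s, featJ t H w J s /\ (intw -> forall v, s v \is a Num.int).
Proof.
move=> cons.
pose P (J : {set I}) := exists s, featJ t H w J s /\ (intw -> forall v, s v \is a Num.int).
suff step : forall J : {set I}, (forall J' : {set I}, J' \proper J -> P J') -> P J.
  suff : forall n (J : {set I}), (#|J| <= n)%N -> P J by move=> h J; exact: (h _ J (leqnn _)).
  elim=> [|n IHn] J hJ; apply: step => J' hJ'; have := proper_card hJ'.
    by rewrite ltnNge (leq_trans hJ) // leq0n.
  by move=> hc; apply: IHn; rewrite -ltnS (leq_trans hc).
move=> J IH.
case: (boolP [exists A1, exists A2, [&& A1 \in J, A2 \in J, A1 != A2 & t A1 == t A2]]).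
  case/existsP => A1 /existsP [A2 /and4P [A1J A2J n12 /eqP t12]].
  have [s1 [f1 i1]] := IH _ (properD1 A1J).
  have [s2 [f2 i2]] : P (J :\: [set B | (t B == t A1) && (B != A1)]).
    apply: IH; apply/properP; split; first exact: subsetDl.
    by exists A2 => //; rewrite !inE A2J -t12 eqxx eq_sym n12.
  pose c := s1 (t A1) - s2 (t A1).
  have hc : s2 (t A1) + c = s1 (t A1) by rewrite /c; lra.
  exists (fun v => Num.min (s1 v) (s2 v + c)); split.
    move=> A AJ.
    have le1 : forall v, Num.min (s1 v) (s2 v + c) <= s1 v by move=> v; rewrite ge_min lexx.
    have le2 : forall v, Num.min (s1 v) (s2 v + c) <= s2 v + c by move=> v; rewrite ge_min lexx orbT.
    have key : (A \in J :\ A1 /\ Num.min (s1 (t A)) (s2 (t A) + c) = s1 (t A)) \/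
               (A \in J :\: [set B | (t B == t A1) && (B != A1)] /\
                Num.min (s1 (t A)) (s2 (t A) + c) = s2 (t A) + c).
      case: (eqVneq A A1) => [-> | nA].
        by right; rewrite hc minxx !inE !eqxx A1J.
      case: (eqVneq (t A) (t A1)) => [tAx | tAx].
        by left; rewrite tAx hc minxx !inE nA AJ.
      case: (leP (s1 (t A)) (s2 (t A) + c)) => h.
        by left; rewrite !inE nA AJ.
      by right; rewrite !inE AJ (negbTE tAx).
    case: key => [[AJ1 e]|[AJ2 e]].
      case: (f1 A AJ1) => v vH le; exists v => //; rewrite e; have := le1 v; lra.
    case: (f2 A AJ2) => v vH le; exists v => //; rewrite e; have := le2 v; lra.
  move=> iw v; rewrite minEle; case: ifP => _; first exact: i1.
  by apply: rpredD; [exact: i2 | apply: rpredB; [exact: i1 | exact: i2]].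
move=> hno.
have notwo : forall A B, A \in J -> B \in J -> t A = t B -> A = B.
  move=> A B AJ BJ tAB; apply/eqP; apply: (contraNT _ hno) => nAB.
  by apply/existsP; exists A; apply/existsP; exists B; rewrite AJ BJ nAB tAB eqxx.
case: (boolP [exists A, exists v, [&& A \in J, v \in H A & [forall B, (B \in J) ==> (t B != v)]]]).
  case/existsP => A /existsP [v0 /and3P [AJ v0H /forallP nov]].
  have J'p : [set B in J | (t B \notin [set v0]) && [disjoint H B & [set v0]]] \proper J.
    apply/properP; split; first by apply/subsetP => B; rewrite inE => /andP[].
    exists A => //; rewrite inE; apply/negP => /andP [_ /andP [_ dis]].
    move: dis; rewrite disjoint_subset => /subsetP /(_ v0 v0H).
    by rewrite !inE eqxx.
  have [s' [f' i']] := IH _ J'p.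
  apply: (lowering Hint (K := [set v0]) (sK := fun _ => 0) _ _ f' i').
    by move=> B BJ; rewrite inE => /eqP tB; have := nov B; rewrite BJ tB eqxx.
  by move=> _ u _; exact: rpred0.
move=> hns.
have headtail : forall A v, A \in J -> v \in H A -> exists2 B, B \in J & t B = v.
  move=> A v AJ vH.
  have : [exists B, (B \in J) && (t B == v)].
    apply: (contraNT _ hns) => hb; apply/existsP; exists A; apply/existsP; exists v.
    rewrite AJ vH /=; apply/forallP => B; apply/implyP => BJ; apply: contra hb => /eqP e.
    by apply/existsP; exists B; rewrite BJ e eqxx.
  by case/existsP => B /andP[BJ /eqP tB]; exists B.
case: (set_0Vmem J) => [J0 | [A0 A0J]].
  exists (fun _ => 0); split; first by move=> A; rewrite J0 inE.
  by move=> _ _; exact: rpred0.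
pose T := [set t A | A in J].
have cycT : is_cycle t H T J.
  split.
  - apply/setP => v; apply/idP/idP.
      case/imsetP => A AJ ->; apply/bigcupP; exists A => //; exact: setU11.
    case/bigcupP => A AJ; rewrite in_setU1 => /orP [/eqP -> | vH]; first exact: imset_f.
    by have [B BJ <-] := headtail A v AJ vH; exact: imset_f.
  - by apply/set0Pn; exists (t A0); exact: imset_f.
  - move=> v /imsetP [A AJ ->]; apply/eqP/cards1P; exists A; apply/setP => B.
    rewrite !inE; apply/andP/eqP => [[BJ /eqP tB] | ->]; first exact: notwo.
    by rewrite AJ eqxx.
have [k [c [a [cs hs]]]] : exists k (c : 'I_k.+1 -> V) (a : 'I_k.+1 -> I),
    cyclic_seq t H T J c a /\ 0 <= \sum_(i < k.+1) w (a i) (c (ordS i)).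
  apply: NNPP => hn; apply: (cons T J); split => // k c a hc; rewrite ltNge.
  by apply/negP => h; apply: hn; exists k, c, a.
case: cs => cinj cT ca cH.
pose F (j : 'I_k.+1) := w (a j) (c (ordS j)).
pose Q (n : nat) := \sum_(j < k.+1 | (j < n)%N) F j.
pose sK v := if [pick i | c i == v] is Some i then Q i else 0.
have sKc : forall i, sK (c i) = Q i.
  move=> i; rewrite /sK; case: pickP => [j /eqP /cinj -> // | none].
  by have := none i; rewrite eqxx.
pose K := [set c i | i : 'I_k.+1].
have cK : forall i, c i \in K by move=> i; apply/imsetP; exists i.
have J'p : [set A in J | (t A \notin K) && [disjoint H A & K]] \proper J.
  apply/properP; split; first by apply/subsetP => B; rewrite inE => /andP[].
  exists (a ord0); first by case: (ca ord0).
  by rewrite inE; case: (ca ord0) => _ ->; rewrite cK /= andbF.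
have [s' [f' i']] := IH _ J'p.
have Qsplit : forall i : 'I_k.+1, Q i.+1 = Q i + F i.
  move=> i; rewrite /Q (bigD1 i) //= addrC; congr (_ + _); apply: eq_bigl => j.
  by rewrite ltnS ltn_neqAle andbC.
apply: (lowering Hint (K := K) (sK := sK) _ _ f' i').
  move=> A AJ /imsetP [i _ tAi].
  have Aai : A = a i.
    by apply: notwo => //; [case: (ca i) | case: (ca i) => _ ->].
  subst A; exists (c (ordS i)); first by rewrite cH cK.
  rewrite tAi !sKc /=.
  case: (ltngtP i k) => hik.
  - rewrite modn_small ?ltnS // Qsplit /F; lra.
  - by have := ltn_ord i; rewrite ltnS leqNgt hik.
  - rewrite hik modnn.
    have -> : Q 0 = 0 by rewrite /Q big_pred0.
    have tot : \sum_(i0 < k.+1) w (a i0) (c (ordS i0)) = Q i + F i.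
      rewrite -Qsplit /Q; apply: eq_bigl => j; by rewrite hik ltn_ord.
    have -> : Q k = Q i by rewrite hik.
    move: hs; rewrite tot /F; lra.
move=> iw v vK; rewrite /sK; case: pickP => [j _ | _]; last exact: rpred0.
by rewrite /Q; apply: rpred_sum => m _; apply: (Hint iw); exact: cH.
Qed.

Theorem mainTheorem6 (R : archiRealFieldType) (V I : finType) (t : I -> V)
  (H : I -> {set V}) (w : I -> V -> R) (wf : wf_HyTN t H) :
  (consistent t H w <-> conservative t H w) /\
  ((forall A v, v \in H A -> w A v \is a Num.int) ->
   ((exists s : V -> R, (forall v, s v \is a Num.int) /\ feasible t H w s)
      <-> conservative t H w)).
Proof.
split.
  split; first by case=> s fs; exact: feas_cons fs.
  move=> cons.
  have [s [fs _]] := @cons_feas R V I t H w False (fun f => False_ind _ f) cons setT.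
  by exists s => A; exact: fs (in_setT A).
move=> Hint; split.
  by case=> s [_ fs]; exact: feas_cons fs.
move=> cons; have [s [fs iS]] := @cons_feas R V I t H w True (fun _ => Hint) cons setT.
exists s; split; first exact: iS.
by move=> A; apply: fs (in_setT A).
Qed.
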